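(* Let $N$ be a positive integer and let $f:\mathbb{N}\to\mathbb{C}$ be periodic with period $N$. Let $a_n(q)$ be the sequence of polynomials in $q$ defined recursively by \[ a_0(q)=0,\qquad a_n(q) = f(n) + \left(1-q^{n-1}\right)a_{n-1}(q) \quad \text{for } n\in\mathbb{N}. \] Then for $q\in\mathbb{C}$ with $|q|<1$ the limit below exists and \[ \lim_{n\rightarrow\infty}\left( \sum_{1\le\ell\le n} f(\ell) - a_n(q) \right) = (q;q)_\infty \sum_{n\ge0}\frac{q^n}{(q;q)_n} \sum_{1\le j\le N} f(j) \left\lceil\frac{n+1-j}{N}\right\rceil . \]
   Context: For $n\in\mathbb{N}_0\cup\{\infty\}$, $(a;q)_n := \prod_{j=0}^{n-1}(1-aq^j)$. *)

(* Defs.v *)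
From Stdlib Require Import Reals ZArith.
From Coquelicot Require Import Coquelicot.
Open Scope C_scope.

Notation CC := Complex.C.

Fixpoint qpoch (a q : CC) (n : nat) : CC :=
  match n with
  | O => 1
  | S m => qpoch a q m * (1 - a * Cpow q m)
  end.

Fixpoint aseq (f : nat -> CC) (q : CC) (n : nat) : CC :=
  match n with
  | O => 0
  | S m => f (S m) + (1 - Cpow q m) * aseq f q m
  end.

Fixpoint sum_1_to (g : nat -> CC) (n : nat) : CC :=
  match n with
  | O => 0
  | S m => sum_1_to g m + g (S m)
  end.

(* ceiling of a / N for integers a and N > 0 (Z.div rounds toward -oo) *)
Definition zceil_div (a N : Z) : Z := (- ((- a) / N))%Z.

Definition coef (f : nat -> CC) (N n : nat) : CC :=
  sum_1_to (fun j => f j *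
     RtoC (IZR (zceil_div (Z.of_nat n + 1 - Z.of_nat j) (Z.of_nat N)))) N.

(* Main.v *)
Require Import Defs.
From Stdlib Require Import Reals ZArith Lra Lia.
From Coquelicot Require Import Coquelicot.
Open Scope C_scope.
Lemma lim_conv {T} (F : (T -> Prop) -> Prop) {FF : Filter F} (u : T -> C) (a : C) :
  filterlim u F (@locally C_UniformSpace a) <-> filterlim u F (@locally (AbsRing_UniformSpace C_AbsRing) a).
Proof.
  rewrite (filterlim_locally_ball_norm (U:=C_NormedModule)).
  rewrite (filterlim_locally_ball_norm (U:=AbsRing_NormedModule C_AbsRing)).
  tauto.
Qed.
Lemma limmul (u v : nat -> C) a b : filterlim u eventually (locally a) -> filterlim v eventually (locally b) ->
  filterlim (fun n => u n * v n) eventually (locally (a * b)).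
Proof. intros Hu Hv. apply (proj2 (lim_conv eventually _ _)). apply lim_conv in Hu. apply lim_conv in Hv.
 
 apply (filterlim_comp_2 (F:=eventually) u v Cmult Hu Hv). exact (filterlim_mult (K:=C_AbsRing) a b). all: typeclasses eauto. Qed.


Lemma lim_shift {U : UniformSpace} (u : nat -> U) l :
  filterlim (fun n => u (S n)) eventually (locally l) -> filterlim u eventually (locally l).
Proof.
  intros H Q HQ. destruct (H Q HQ) as [M HM]. exists (S M). intros n Hn.
  destruct n; [lia|]. apply HM. lia.
Qed.

Lemma ex_series_nr (x : R) : (0 <= x < 1)%R -> ex_series (fun m => INR m * x ^ m)%R.
Proof.
  intros Hx. set (s := ((1 + x) / 2)%R).
  assert (Hs : (0 < s < 1)%R) by (unfold s; lra).
  set (a := fun m => (INR (S m) * s ^ m)%R).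
  assert (Ha : forall m, a m <> 0%R).
  { intros m. unfold a. apply Rmult_integral_contrapositive_currified.
    apply not_0_INR; lia. apply pow_nonzero; lra. }
  assert (Hlim : is_lim_seq (fun n => Rabs (a (S n) / a n)) s).
  { apply is_lim_seq_ext with (fun n => ((1 + / INR (S n)) * s)%R).
    { intros n. unfold a. rewrite Rabs_pos_eq.
      - rewrite !S_INR. simpl pow. field. split. apply pow_nonzero; lra.
        pose proof (pos_INR n); lra.
      - unfold Rdiv. apply Rmult_le_pos; [apply Rmult_le_pos|]. apply pos_INR. apply pow_le; lra.
        left. apply Rinv_0_lt_compat. apply Rmult_lt_0_compat. apply lt_0_INR; lia. apply pow_lt; lra. }
    replace (Finite s) with (Rbar_mult (Finite (1 + 0)) s) by (simpl; f_equal; ring).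
    apply is_lim_seq_scal_r. apply is_lim_seq_plus'. apply is_lim_seq_const.
    apply (is_lim_seq_incr_1 (fun n => / INR n)%R).
    replace (Finite 0) with (Rbar_inv p_infty) by reflexivity.
    apply is_lim_seq_inv. apply is_lim_seq_INR. discriminate. }
  pose proof (ex_series_DAlembert a s (proj2 Hs) Ha Hlim) as Hex.
  apply (ex_series_le (V:=R_CompleteNormedModule) _ (fun n => Rabs (a n))); [|exact Hex].
  intros n. change norm with Rabs. unfold a.
  pose proof (pos_INR n). pose proof (pow_le x n (proj1 Hx)).
  rewrite !Rabs_pos_eq.
  - apply Rmult_le_compat; try lra. rewrite S_INR; lra. apply pow_incr. unfold s; lra.
  - apply Rmult_le_pos. apply pos_INR. apply pow_le; lra.
  - apply Rmult_le_pos; lra.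
Qed.
Section Main.
Variable (N : nat) (f : nat -> C) (q : C).
Hypothesis HN : (0 < N)%nat.
Hypothesis Hper : forall n : nat, (1 <= n)%nat -> f (n + N)%nat = f n.

Lemma sum_1_to_plus (g h : nat -> C) M :
  sum_1_to (fun j => g j + h j) M = sum_1_to g M + sum_1_to h M.
Proof. induction M; simpl. - ring. - rewrite IHM. ring. Qed.

Lemma sum_1_to_ext (g h : nat -> C) M : (forall j, g j = h j) ->
  sum_1_to g M = sum_1_to h M.
Proof. intros H; induction M; simpl; [reflexivity| rewrite IHM, H; reflexivity]. Qed.

Lemma S_add n : sum_1_to f (n + N) = sum_1_to f n + sum_1_to f N.
Proof.
  induction n; simpl. - ring.
  - rewrite IHn. replace (S (n + N)) with (S n + N)%nat by lia. rewrite (Hper (S n)) by lia. ring.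
Qed.

Lemma zc_shift a : zceil_div (a + Z.of_nat N) (Z.of_nat N) = (zceil_div a (Z.of_nat N) + 1)%Z.
Proof.
  unfold zceil_div.
  replace (- (a + Z.of_nat N))%Z with (- a + (-1) * Z.of_nat N)%Z by lia.
  rewrite Z_div_plus_full by lia. lia.
Qed.

Lemma zc_one a : (1 <= a <= Z.of_nat N)%Z -> zceil_div a (Z.of_nat N) = 1%Z.
Proof.
  intros H. unfold zceil_div.
  rewrite <- (Z.div_unique (- a) (Z.of_nat N) (-1) (Z.of_nat N - a)); [lia|lia|lia].
Qed.

Lemma zc_zero a : (- Z.of_nat N < a <= 0)%Z -> zceil_div a (Z.of_nat N) = 0%Z.
Proof.
  intros H. unfold zceil_div. rewrite Z.div_small by lia. lia.
Qed.

Lemma coef_shift n : coef f N (n + N) = coef f N n + sum_1_to f N.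
Proof.
  unfold coef. rewrite <- sum_1_to_plus. apply sum_1_to_ext. intros j.
  replace (Z.of_nat (n + N) + 1 - Z.of_nat j)%Z with ((Z.of_nat n + 1 - Z.of_nat j) + Z.of_nat N)%Z by lia.
  rewrite zc_shift, plus_IZR, RtoC_plus. simpl IZR. ring.
Qed.

Lemma sum_ind n M :
  sum_1_to (fun j => if (j <=? n)%nat then f j else 0) M = sum_1_to f (Nat.min n M).
Proof.
  induction M; cbn [sum_1_to].
  - rewrite Nat.min_0_r. reflexivity.
  - rewrite IHM. destruct (Nat.leb_spec (S M) n).
    + replace (Nat.min n (S M)) with (S M) by lia. replace (Nat.min n M) with M by lia. reflexivity.
    + replace (Nat.min n (S M)) with n by lia. replace (Nat.min n M) with n by lia. ring.
Qed.

Lemma coef_small n : (n < N)%nat -> coef f N n = sum_1_to f n.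
Proof.
  intros Hn. unfold coef.
  transitivity (sum_1_to (fun j => if (j <=? n)%nat then f j else 0) N).
  2: { rewrite sum_ind. f_equal. lia. }
  assert (Hext : forall M, (M <= N)%nat ->
    sum_1_to (fun j => f j * RtoC (IZR (zceil_div (Z.of_nat n + 1 - Z.of_nat j) (Z.of_nat N)))) M =
    sum_1_to (fun j => if (j <=? n)%nat then f j else 0) M).
  { induction M; intros HM; cbn [sum_1_to]; [reflexivity|]. rewrite IHM by lia. f_equal.
    destruct (Nat.leb_spec (S M) n).
    - rewrite zc_one by lia. simpl IZR. ring.
    - rewrite zc_zero by lia. simpl IZR. ring. }
  apply Hext. lia.
Qed.

Lemma coef_S n : coef f N n = sum_1_to f n.
Proof.
  rewrite (Nat.div_mod_eq n N).
  generalize (Nat.mod_upper_bound n N ltac:(lia)). generalize (n mod N)%nat (n / N)%nat.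
  intros m k Hm. induction k.
  - rewrite Nat.mul_0_r. simpl. apply coef_small; lia.
  - replace (N * S k + m)%nat with ((N * k + m) + N)%nat by lia.
    rewrite coef_shift, S_add, IHk. reflexivity.
Qed.

Hypothesis Hq : (Cmod q < 1)%R.
Let r := Cmod q.
Let P n := qpoch q q n.

Lemma r_ge0 : (0 <= r)%R.
Proof. apply Cmod_ge_0. Qed.

Lemma Cpow_mod n : Cmod (Cpow q n) = (r ^ n)%R.
Proof. apply Cmod_pow. Qed.

Lemma rpow_le1 n : (0 <= r ^ n <= 1)%R.
Proof.
  split. apply pow_le, r_ge0.
  destruct n. simpl; lra. left. apply pow_lt_1_compat; [split; [apply r_ge0| exact Hq] | lia].
Qed.

Lemma factor_nz n : 1 - Cpow q (S n) <> 0.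
Proof.
  intros H. assert (E : Cpow q (S n) = 1).
  { replace (Cpow q (S n)) with (1 - (1 - Cpow q (S n))) by ring. rewrite H. ring. }
  apply (f_equal Cmod) in E. rewrite Cpow_mod, Cmod_1 in E.
  assert (H1 : (0 <= r ^ S n < 1)%R) by (apply pow_lt_1_compat; [split; [apply r_ge0| exact Hq] | lia]).
  lra.
Qed.

Lemma P_S n : P (S n) = P n * (1 - Cpow q (S n)).
Proof. reflexivity. Qed.

Lemma P_nz n : P n <> 0.
Proof.
  induction n.
  - unfold P; simpl. intro H. apply (f_equal Cmod) in H. rewrite Cmod_1, Cmod_0 in H. lra.
  - rewrite P_S. apply Cmod_gt_0. rewrite Cmod_mult.
    apply Rmult_lt_0_compat; apply Cmod_gt_0; [exact IHn | apply factor_nz].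
Qed.

Definition bseq n := sum_1_to f n - aseq f q n.
Definition tseq n := Cpow q n / P n * sum_1_to f n.

Lemma key M : bseq (S M) = P M * sum_n tseq M.
Proof.
  induction M.
  - rewrite sum_O. unfold bseq, tseq, P. simpl. field.
  - rewrite sum_Sn. change plus with Cplus.
    rewrite P_S. 
    assert (Hb : bseq (S (S M)) = (1 - Cpow q (S M)) * bseq (S M) + Cpow q (S M) * sum_1_to f (S M)).
    { unfold bseq. cbn [sum_1_to aseq]. ring. }
    rewrite Hb, IHM. unfold tseq. rewrite P_S. field. split; [apply factor_nz | apply P_nz].
Qed.

Lemma Cmod_1m_lower z : (1 - Cmod z <= Cmod (1 - z))%R.
Proof.
  pose proof (Cmod_triangle (1 - z) z) as H.
  replace (1 - z + z) with (RtoC 1) in H by ring. rewrite Cmod_1 in H. lra.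
Qed.

Lemma Cmod_1m_upper z : (Cmod (1 - z) <= 1 + Cmod z)%R.
Proof.
  pose proof (Cmod_triangle 1 (- z)) as H. rewrite Cmod_1, Cmod_opp in H. exact H.
Qed.

Lemma exp_le x y : (x <= y)%R -> (exp x <= exp y)%R.
Proof. intros [H|H]. left; apply exp_increasing; exact H. subst; lra. Qed.

Lemma P_lower k j : (Cmod (P k) * (1 - r^k * (1 - r^j) / (1 - r)) <= Cmod (P (k + j)))%R.
Proof.
  pose proof r_ge0 as Hr0. assert (Hr1 : (r < 1)%R) by exact Hq.
  induction j.
  - rewrite Nat.add_0_r. simpl pow. replace (1 - r ^ k * (1 - 1) / (1 - r))%R with 1%R by (field; lra). lra.
  - rewrite Nat.add_succ_r, P_S, Cmod_mult.
    pose proof (Cmod_1m_lower (Cpow q (S (k + j)))) as Hphi. rewrite Cpow_mod in Hphi.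
    replace (r ^ S (k + j))%R with (r * (r ^ k * r ^ j))%R in Hphi by (simpl; rewrite pow_add; ring).
    replace (r ^ S j)%R with (r * r ^ j)%R by (simpl; ring).
    pose proof (rpow_le1 k) as Ha. pose proof (rpow_le1 j) as Hb.
    pose proof (Cmod_ge_0 (P k)) as Hc. pose proof (Cmod_ge_0 (P (k + j))) as Hm.
    set (a := (r ^ k)%R) in *. set (b := (r ^ j)%R) in *.
    set (c := Cmod (P k)) in *. set (m := Cmod (P (k + j))) in *.
    set (phi := Cmod (1 - Cpow q (S (k + j)))) in *.
    replace (a * (1 - r * b) / (1 - r))%R with (a * (1 - b) / (1 - r) + a * b)%R by (field; lra).
    assert (HA : (0 <= a * (1 - b) / (1 - r))%R).
    { apply Rmult_le_pos; [nra| left; apply Rinv_0_lt_compat; lra]. }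
    set (A := (a * (1 - b) / (1 - r))%R) in *.
    assert (Hab : (0 <= a * b)%R) by (apply Rmult_le_pos; lra).
    assert (Hab1 : (a * b <= 1)%R) by (rewrite <- (Rmult_1_l 1); apply Rmult_le_compat; lra).
    assert (Hrab : (0 <= r * (a * b) <= a * b)%R).
    { split. apply Rmult_le_pos; lra.
      rewrite <- (Rmult_1_l (a * b)) at 2. apply Rmult_le_compat_r; lra. }
    assert (H1 : (m * (1 - r * (a * b)) <= m * phi)%R) by (apply Rmult_le_compat_l; lra).
    assert (H2 : (c * (1 - A) * (1 - r * (a * b)) <= m * (1 - r * (a * b)))%R) by (apply Rmult_le_compat_r; lra).
    assert (H3 : (0 <= c * A * (r * (a * b)))%R) by (apply Rmult_le_pos; [apply Rmult_le_pos|]; lra).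
    nra.
Qed.

Lemma P_upper n : (Cmod (P n) <= exp (1 / (1 - r)))%R.
Proof.
  pose proof r_ge0 as Hr0. assert (Hr1 : (r < 1)%R) by exact Hq.
  assert (H : forall n, (Cmod (P n) <= exp ((1 - r ^ n) / (1 - r)))%R).
  { induction n0.
    - unfold P; simpl. rewrite Cmod_1. replace ((1 - 1) / (1 - r))%R with 0%R by (field; lra). rewrite exp_0. lra.
    - rewrite P_S, Cmod_mult.
      pose proof (Cmod_1m_upper (Cpow q (S n0))) as Hphi. rewrite Cpow_mod in Hphi.
      pose proof (exp_ineq1_le (r ^ S n0)) as He.
      pose proof (rpow_le1 n0) as Hb.
      replace (r ^ S n0)%R with (r * r ^ n0)%R in * by (simpl; ring).
      assert (Hle : ((1 - r ^ n0) / (1 - r) + r * r ^ n0 <= (1 - r * r ^ n0) / (1 - r))%R).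
      { apply (Rmult_le_reg_r (1 - r)); [lra|].
        replace (((1 - r ^ n0) / (1 - r) + r * r ^ n0) * (1 - r))%R with (1 - r^n0 + r * r^n0 * (1 - r))%R by (field; lra).
        replace ((1 - r * r ^ n0) / (1 - r) * (1 - r))%R with (1 - r * r^n0)%R by (field; lra). assert (0 <= r ^ n0 * ((1 - r) * (1 - r)))%R by (apply Rmult_le_pos; [lra| apply Rmult_le_pos; lra]). nra. }
      apply exp_le in Hle. rewrite exp_plus in Hle.
      pose proof (Cmod_ge_0 (P n0)). pose proof (Cmod_ge_0 (1 - Cpow q (S n0))).
      eapply Rle_trans; [| exact Hle].
      apply Rmult_le_compat; try lra. }
  eapply Rle_trans; [apply H|]. apply exp_le.
  pose proof (rpow_le1 n). apply Rmult_le_compat_r; [left; apply Rinv_0_lt_compat; lra| lra].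
Qed.

Fixpoint Rsum1 (g : nat -> R) (n : nat) : R :=
  match n with O => 0%R | S m => (Rsum1 g m + g (S m))%R end.

Lemma Rsum1_nonneg (g : nat -> R) M : (forall i, 0 <= g i)%R -> (0 <= Rsum1 g M)%R.
Proof. intros Hg. induction M; simpl. lra. pose proof (Hg (S M)). lra. Qed.

Lemma Rsum1_le (g : nat -> R) M j : (forall i, 0 <= g i)%R -> (1 <= j <= M)%nat -> (g j <= Rsum1 g M)%R.
Proof.
  intros Hg. induction M; intros Hj; [lia|]. simpl.
  destruct (Nat.eq_dec j (S M)).
  - subst. pose proof (Rsum1_nonneg g M Hg). lra.
  - pose proof (IHM ltac:(lia)). pose proof (Hg (S M)). lra.
Qed.

Definition Bf := Rsum1 (fun j => Cmod (f j)) N.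

Lemma Bf_nonneg : (0 <= Bf)%R.
Proof. apply Rsum1_nonneg. intros; apply Cmod_ge_0. Qed.

Lemma f_bound n : (1 <= n)%nat -> (Cmod (f n) <= Bf)%R.
Proof.
  induction n as [n IH] using lt_wf_ind. intros Hn.
  destruct (Nat.le_gt_cases n N).
  - apply (Rsum1_le (fun j => Cmod (f j))). intros; apply Cmod_ge_0. lia.
  - replace n with ((n - N) + N)%nat by lia. rewrite Hper by lia. apply IH; lia.
Qed.

Lemma S_bound n : (Cmod (sum_1_to f n) <= INR n * Bf)%R.
Proof.
  induction n; simpl sum_1_to.
  - rewrite Cmod_0. simpl. lra.
  - eapply Rle_trans; [apply Cmod_triangle|]. rewrite S_INR.
    pose proof (f_bound (S n) ltac:(lia)). lra.
Qed.

Definition dseq n := match n with O => P O | S i => P (S i) - P i end.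

Lemma sum_dseq n : sum_n dseq n = P n.
Proof.
  induction n. rewrite sum_O. reflexivity.
  rewrite sum_Sn, IHn. change plus with Cplus. simpl dseq. change (@eq C (P n + (P (S n) - P n)) (P (S n))). ring.
Qed.

Lemma P_conv : exists Pl, filterlim P eventually (locally Pl).
Proof.
  pose proof r_ge0 as Hr0. assert (Hr1 : (r < 1)%R) by exact Hq.
  set (E := exp (1 / (1 - r))).
  set (bnd := fun n => match n with O => 1%R | S i => (E * r ^ i)%R end).
  assert (Hex : ex_series dseq).
  { apply (ex_series_le (V:=C_CompleteNormedModule) _ bnd).
    - intros [|i]; change norm with Cmod; simpl bnd.
      + unfold dseq, P; simpl. rewrite Cmod_1. lra.
      + unfold dseq. rewrite P_S.
        replace (P i * (1 - Cpow q (S i)) - P i) with (- (P i * Cpow q (S i))) by ring.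
        rewrite Cmod_opp, Cmod_mult, Cpow_mod.
        pose proof (P_upper i). pose proof (rpow_le1 i). pose proof (Cmod_ge_0 (P i)).
        replace (r ^ S i)%R with (r * r ^ i)%R by (simpl; ring).
        apply Rmult_le_compat; try lra. apply Rmult_le_pos; lra. exact H.
        rewrite <- (Rmult_1_l (r ^ i)) at 2. apply Rmult_le_compat_r; lra.
    - apply ex_series_incr_1. simpl.
      apply (ex_series_ext (fun n => scal E (r ^ n)%R)). reflexivity.
      apply (ex_series_scal_l (V:=R_NormedModule) E (fun n => r ^ n)%R). apply ex_series_geom. rewrite Rabs_pos_eq; lra. }
  destruct Hex as [Pl HPl]. exists Pl.
  eapply filterlim_ext; [apply sum_dseq| exact HPl].
Qed.

Lemma P_lower_half : exists k, (0 < Cmod (P k))%R /\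
  forall j, (Cmod (P k) / 2 <= Cmod (P (k + j)))%R.
Proof.
  pose proof r_ge0 as Hr0. assert (Hr1 : (r < 1)%R) by exact Hq.
  destruct (pow_lt_1_zero r ltac:(rewrite Rabs_pos_eq; lra) ((1 - r) / 2) ltac:(lra)) as [k Hk].
  exists k. split. apply Cmod_gt_0, P_nz.
  intros j. eapply Rle_trans; [|apply P_lower].
  pose proof (Hk k (le_n k)) as Hk'. rewrite Rabs_pos_eq in Hk' by (apply pow_le; lra).
  pose proof (rpow_le1 j). pose proof (Cmod_ge_0 (P k)).
  assert (H2 : (r ^ k * (1 - r ^ j) / (1 - r) <= 1 / 2)%R).
  { apply (Rmult_le_reg_r (1 - r)); [lra|].
    replace (r ^ k * (1 - r ^ j) / (1 - r) * (1 - r))%R with (r ^ k * (1 - r ^ j))%R by (field; lra).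
    pose proof (rpow_le1 k). 
    assert (r ^ k * (1 - r ^ j) <= r ^ k)%R by (rewrite <- (Rmult_1_r (r ^ k)) at 2; apply Rmult_le_compat_l; lra).
    lra. }
  assert (H3 : (Cmod (P k) * (1/2) <= Cmod (P k) * (1 - r ^ k * (1 - r ^ j) / (1 - r)))%R)
    by (apply Rmult_le_compat_l; lra).
  lra.
Qed.

Lemma t_conv : ex_series (V:=C_NormedModule) tseq.
Proof.
  pose proof r_ge0 as Hr0. assert (Hr1 : (r < 1)%R) by exact Hq.
  destruct P_lower_half as [k [Hk Hlow]].
  set (c := (Cmod (P k) / 2)%R).
  apply (ex_series_incr_n tseq k).
  apply (ex_series_le (V:=C_CompleteNormedModule) _ (fun j => (Bf / c) * (INR (k + j) * r ^ (k + j)))%R).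
  - intros j. change norm with Cmod. unfold tseq.
    rewrite Cmod_mult, Cmod_div by apply P_nz. rewrite Cpow_mod.
    pose proof (Hlow j). pose proof (S_bound (k + j)). pose proof Bf_nonneg.
    pose proof (rpow_le1 (k + j)). pose proof (pos_INR (k + j)).
    assert (Hc : (0 < c)%R) by (unfold c; lra).
    assert (Hinv : (/ Cmod (P (k + j)) <= / c)%R) by (apply Rinv_le_contravar; unfold c in *; lra).
    unfold Rdiv.
    replace (Bf * / c * (INR (k + j) * r ^ (k + j)))%R with (r ^ (k + j) * / c * (INR (k + j) * Bf))%R by ring.
    apply Rmult_le_compat. apply Rmult_le_pos. lra. left; apply Rinv_0_lt_compat; lra.
    apply Cmod_ge_0. apply Rmult_le_compat_l; lra. exact H0.
  - apply (ex_series_scal_l (V:=R_NormedModule) (Bf / c)%R (fun j => INR (k + j) * r ^ (k + j))%R).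
    apply (ex_series_incr_n (fun j => INR j * r ^ j)%R k). apply ex_series_nr. lra.
Qed.

Lemma main_exists : exists (L Pl Ss : CC),
    filterlim (fun n => sum_1_to f n - aseq f q n) eventually (locally L) /\
    filterlim (fun n => qpoch q q n) eventually (locally Pl) /\
    is_series (V := C_NormedModule)
      (fun n => Cpow q n / qpoch q q n * coef f N n) Ss /\
    L = Pl * Ss.
Proof.
  destruct P_conv as [Pl HPl].
  destruct t_conv as [Ss HSs].
  exists (Pl * Ss), Pl, Ss. split; [|split; [exact HPl| split; [|reflexivity]]].
  - apply lim_shift.
    apply (filterlim_ext (fun M => P M * sum_n tseq M)). intros M. symmetry. exact (key M).
    apply limmul. exact HPl. exact HSs.
  - apply (is_series_ext tseq). intros n. unfold tseq. rewrite coef_S. reflexivity. exact HSs.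
Qed.
End Main.

Theorem corollary1p4 (N : nat) (f : nat -> CC) (q : CC) :
  (0 < N)%nat ->
  (forall n : nat, (1 <= n)%nat -> f (n + N)%nat = f n) ->
  (Cmod q < 1)%R ->
  exists (L P S : CC),
    filterlim (fun n => sum_1_to f n - aseq f q n) eventually (locally L) /\
    filterlim (fun n => qpoch q q n) eventually (locally P) /\
    is_series (V := C_NormedModule)
      (fun n => Cpow q n / qpoch q q n * coef f N n) S /\
    L = P * S.
Proof.
  intros HN Hper Hq. exact (main_exists N f q HN Hper Hq).
Qed.
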